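(* Let $G=(V,E)$ be a finite graph with positive edge weights $(\theta_e)$, let $z>0$, let $\mathbf{y}(z)\in(0,\infty)^{\vec E}$ be the (unique) solution of $\mathbf{y}(z)=z\mathcal{R}_G(\mathbf{y}(z))$, and define for each edge $e$ with orientations $\vec e,-\vec e$ \[ x_e(z)=\frac{\theta_e y_{\vec e}(z)y_{-\vec e}(z)}{z+\theta_e y_{\vec e}(z)y_{-\vec e}(z)}. \] Then for every edge $e=(uv)\in E$, \[ \frac{x_e(z)(1-x_e(z))}{z}= \theta_e\Big(1-\sum_{e'\in \partial u}x_{e'}(z)\Big)\Big(1-\sum_{e'\in \partial v}x_{e'}(z)\Big). \]
   Context: $\vec E$ contains the two orientations $u\to v$, $v\to u$ of each edge $uv$. $\mathcal{R}_G(\mathbf{a})_{u\to v}=(1+\sum_{w\in\partial u\setminus v}\theta_{wu}a_{w\to u})^{-1}$, where $\partial u\setminus v$ is the set of neighbours of $u$ other than $v$ and empty sums are $0$; $z\mathcal{R}_G$ multiplies each component by $z$. $\partial u$ denotes the set of edges incident to $u$. *)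

(* Defs.v *)
From mathcomp Require Import all_boot all_order all_algebra.
Set Implicit Arguments. Unset Strict Implicit. Unset Printing Implicit Defensive.
Import Order.TTheory GRing.Theory Num.Theory.
Local Open Scope ring_scope.

(* Oriented edge u -> v is the pair (u, v) with adj u v.
   Edge weights: theta : T -> T -> R, symmetric, positive on edges.
   A vector a in R^{\vec E} is a function a : T -> T -> R, where a u v is the
   value on u -> v (values on non-edges are irrelevant). *)

Definition simple_graph (T : finType) (adj : rel T) : Prop :=
  symmetric adj /\ irreflexive adj.

Definition RG (R : realFieldType) (T : finType) (adj : rel T)
    (theta : T -> T -> R) (a : T -> T -> R) (u v : T) : R :=
  (1 + \sum_(w | adj w u && (w != v)) theta w u * a w u)^-1.

Definition is_fixed_point (R : realFieldType) (T : finType) (adj : rel T)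
    (theta : T -> T -> R) (z : R) (y : T -> T -> R) : Prop :=
  forall u v, adj u v -> 0 < y u v /\ y u v = z * RG adj theta y u v.

Definition xe (R : realFieldType) (T : finType)
    (theta : T -> T -> R) (z : R) (y : T -> T -> R) (u v : T) : R :=
  theta u v * y u v * y v u / (z + theta u v * y u v * y v u).

(* Main.v *)
Require Import Defs.
From mathcomp Require Import all_boot all_order all_algebra.
From mathcomp Require Import ring lra.
Import Order.TTheory GRing.Theory Num.Theory.
Local Open Scope ring_scope.

Theorem lemma4p16 (R : realFieldType) (T : finType) (adj : rel T)
    (theta : T -> T -> R) (z : R) (y : T -> T -> R) :
  simple_graph adj ->
  (forall u v, theta u v = theta v u) ->
  (forall u v, adj u v -> 0 < theta u v) ->
  0 < z ->
  is_fixed_point adj theta z y ->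
  forall u v, adj u v ->
    xe theta z y u v * (1 - xe theta z y u v) / z =
    theta u v * (1 - \sum_(w | adj u w) xe theta z y u w)
              * (1 - \sum_(w | adj v w) xe theta z y v w).
Proof.
move=> [asym _] thS thP zP fp.
pose S u := \sum_(w | adj w u) theta w u * y w u.
have S0 : forall u, 0 <= S u.
  move=> u; apply: sumr_ge0 => w h.
  by apply: mulr_ge0; apply: ltW; [exact: thP | case: (fp _ _ h)].
have key : forall u v, adj u v -> z = y u v * (1 + S u - theta v u * y v u).
  move=> u v huv; have [_ e] := fp u v huv.
  have hvu : adj v u by rewrite asym.
  have -> : 1 + S u - theta v u * y v u =
            1 + \sum_(w | adj w u && (w != v)) theta w u * y w u.
    by rewrite /S (bigD1 v) //=; ring.
  rewrite /RG in e.
  have ne : 1 + \sum_(w | adj w u && (w != v)) theta w u * y w u != 0.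
    apply: lt0r_neq0; apply: ltr_pwDl => //; apply: sumr_ge0 => w /andP[h _].
    by apply: mulr_ge0; apply: ltW; [exact: thP | case: (fp _ _ h)].
  by rewrite {1}e -mulrA mulVf // mulr1.
have xeE : forall u w, adj u w -> xe theta z y u w = theta w u * y w u / (1 + S u).
  move=> u w huw; rewrite /xe (key u w huw) (thS u w).
  have [p0 _] := fp u w huw.
  have A0 : 1 + S u != 0 by apply: lt0r_neq0; apply: ltr_pwDl => //.
  have p0' : y u w != 0 by apply: lt0r_neq0.
  have -> : y u w * (1 + S u - theta w u * y w u) + theta w u * y u w * y w u
            = y u w * (1 + S u) by ring.
  by field; apply/andP.
have sumE : forall u, 1 - \sum_(w | adj u w) xe theta z y u w = (1 + S u)^-1.
  move=> u.
  have A0 : 1 + S u != 0 by apply: lt0r_neq0; apply: ltr_pwDl => //.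
  rewrite (eq_bigr (fun w => theta w u * y w u / (1 + S u))); last first.
    by move=> w h; rewrite xeE.
  rewrite -mulr_suml (eq_bigl (fun w => adj w u)); last by move=> w; rewrite asym.
  rewrite -/(S u); by field.
move=> u v huv.
have hvu : adj v u by rewrite asym.
rewrite sumE sumE (xeE u v huv).
have k1 := key u v huv; have k2 := key v u hvu.
have [p0 _] := fp u v huv; have [q0 _] := fp v u hvu.
have A0 : 1 + S u != 0 by apply: lt0r_neq0; apply: ltr_pwDl => //.
have B0 : 1 + S v != 0 by apply: lt0r_neq0; apply: ltr_pwDl => //.
have p0' : y u v != 0 by apply: lt0r_neq0.
have q0' : y v u != 0 by apply: lt0r_neq0.
have z0 : z != 0 by apply: lt0r_neq0.
have D0 : 1 + S u - theta v u * y v u != 0.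
  apply/eqP=> h; move: k1; rewrite h mulr0 => h'; by move: z0; rewrite h' eqxx.
have hB : 1 + S v = y u v * (1 + S u) / y v u.
  apply: (mulIf q0'); rewrite divfK //.
  move: k1 k2; rewrite (thS u v) => k1 k2.
  have : y v u * (1 + S v - theta v u * y u v) = y u v * (1 + S u - theta v u * y v u).
    by rewrite -k1 -k2.
  move=> h; apply/eqP; rewrite -subr_eq0; apply/eqP.
  rewrite mulrC; rewrite -[X in _ = X](subrr (y v u * (1 + S v - theta v u * y u v))).
  rewrite {2}h; ring.
rewrite hB {1}k1 (thS u v).
field; rewrite ?p0' ?A0 ?q0' ?D0 //=.
Qed.
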